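(* Let $q$ be a power of an odd prime, let $E$ be an elliptic curve over $\mathbb{F}_q$ with a rational point $O$, and let $D\subset E(\mathbb{F}_q)\setminus\{O\}$ be a set of rational points with $n=|D|$. For an integer $k$ with $2\leq k\leq n-2$, let $C$ be either $C_{\Omega}(D,kO)$ or $C_{\mathcal{L}}(D,kO)$. Then the covering radius of $C$ equals either $n-\dim(C)-1$ or $n-\dim(C)$.
   Context: An elliptic curve $E$ over $\mathbb{F}_q$ is a geometrically irreducible smooth projective curve of genus $1$; $E(\mathbb{F}_q)$ denotes its rational points. For a divisor $V$, $\mathcal{L}(V)=\{f\in\mathbb{F}_q(E)^*:\mathrm{div}(f)\geq -V\}\cup\{0\}$ and $\Omega(V)$ is the space of Weil differentials $\omega$ with $\mathrm{div}(\omega)\geq V$, together with $0$. For $D=\{P_1,\dots,P_n\}\subset E(\mathbb{F}_q)$ (also viewed as the divisor $P_1+\dots+P_n$) and a divisor $G$ with support disjoint from $D$: $C_{\mathcal{L}}(D,G)=\{(f(P_1),\dots,f(P_n)):f\in\mathcal{L}(G)\}$ and $C_{\Omega}(D,G)=\{(\mathrm{res}_{P_1}(\omega),\dots,\mathrm{res}_{P_n}(\omega)):\omega\in\Omega(G-D)\}$; these two codes are dual to each other. The covering radius of a linear code $C\subseteq\mathbb{F}_q^n$ is $\rho(C)=\max_{u\in\mathbb{F}_q^n}\min_{c\in C}d(u,c)$, where $d$ is the Hamming distance. *)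

(* Defs.v *)
From HB Require Import structures.
From mathcomp Require Import all_boot all_order all_algebra.
Set Implicit Arguments. Unset Strict Implicit. Unset Printing Implicit Defensive.
Import Order.TTheory GRing.Theory Num.Theory.
Local Open Scope ring_scope.

Section EllipticCodes.
Variable F : finFieldType.

(* Elliptic curve over F (odd characteristic) in Weierstrass form
   y^2 = f(x), f monic cubic with no repeated root (nonsingular);
   the distinguished rational point O is the point at infinity. *)
Definition elliptic_poly (f : {poly F}) : bool :=
  [&& size f == 4%N, f \is monic & coprimep f f^`()].

Definition on_curve (f : {poly F}) (P : F * F) : bool := P.2 ^+ 2 == f.[P.1].

Definition ev_fun (a b : {poly F}) (P : F * F) : F := a.[P.1] + b.[P.1] * P.2.

(* L(kO) = { a(x) + b(x) y : 2 deg a <= k, 2 deg b + 3 <= k }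
   (x has pole order 2 and y pole order 3 at O).  It is spanned by the
   monomials x^i (2i <= k) and x^i y (2i+3 <= k), i <= k.  Generator
   matrix of C_L(D,kO) (rows = evaluations of these spanning functions;
   rows for monomials outside L(kO) are zero). *)
Definition genL (D : seq (F * F)) (k : nat) : 'M[F]_(k.+1 + k.+1, size D) :=
  col_mx
    (\matrix_(i < k.+1, l < size D)
       if (2 * i <= k)%N then ev_fun 'X^i 0 (nth (0, 0) D l) else 0)
    (\matrix_(i < k.+1, l < size D)
       if (2 * i + 3 <= k)%N then ev_fun 0 'X^i (nth (0, 0) D l) else 0).

(* Codes as square matrices whose row space is the code. *)
Definition code_L (D : seq (F * F)) (k : nat) : 'M[F]_(size D) :=
  <<genL D k>>%MS.

(* C_Omega(D,kO) is the dual of C_L(D,kO): { u | u . c = 0 for all c in C_L }. *)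
Definition code_Omega (D : seq (F * F)) (k : nat) : 'M[F]_(size D) :=
  kermx (genL D k)^T.

Definition hamming {n : nat} (u v : 'rV[F]_n) : nat := #|[set i | u 0 i != v 0 i]|.

Definition covering_radius {n : nat} (C : 'M[F]_n) : nat :=
  \max_(u : 'rV[F]_n) \big[minn/n]_(c : 'rV[F]_n | (c <= C)%MS) hamming u c.

End EllipticCodes.

(* Main.v *)
Require Import Defs.
From HB Require Import structures.
From mathcomp Require Import all_boot all_order all_algebra.
From mathcomp Require Import ring zify.
Set Implicit Arguments. Unset Strict Implicit. Unset Printing Implicit Defensive.
Import Order.TTheory GRing.Theory Num.Theory.
Local Open Scope ring_scope.

Ltac glia := repeat (match goal with H : context [size _] |- _ => revert H end);
  repeat (match goal with |- context [size ?p] => let s := fresh "s" in move: (size p) => s end);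
  intros; lia.

Section Curve.
Variable F : finFieldType.

Lemma coprime_sq_XsubC (x y : F) : y != x ->
  coprimep (('X - y%:P) ^+ 2) ('X - x%:P).
Proof.
move=> nyx; apply: coprimep_expl; rewrite coprimep_XsubC root_XsubC.
by rewrite eq_sym.
Qed.

Lemma count_pts (p : {poly F}) (T : seq (F * F)) :
  p != 0 -> uniq T ->
  (forall P Q, P \in T -> Q \in T -> P.1 = Q.1 -> P = Q \/ Q = (P.1, - P.2)) ->
  (forall P, P \in T -> root p P.1) ->
  (forall P, P \in T -> (P.1, - P.2) \in T -> (P.1, - P.2) != P ->
     ('X - P.1%:P) ^+ 2 %| p) ->
  (size T < size p)%N.
Proof.
have [m] := ubnP (size T); elim: m T p => // m IH [|P T'] p /= szT pn0 uT hx hr hsq.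
  by rewrite size_poly_gt0.
move: uT => /andP [PT' uT'].
set x := P.1; set Q := (x, - P.2).
have PT : P \in P :: T' by rewrite inE eqxx.
have sub' : forall R, R \in T' -> R \in P :: T' by move=> R RT; rewrite inE RT orbT.
case: (boolP (Q \in T')) => QT'.
- have QP : Q != P by apply/eqP => QP; move: PT'; rewrite -QP QT'.
  have /dvdpP [p' pE] := hsq P PT (sub' _ QT') QP.
  have p'n0 : p' != 0 by apply: contraNneq pn0 => p'0; rewrite pE p'0 mul0r.
  have sqn0 : ('X - x%:P) ^+ 2 != 0 by rewrite expf_neq0 // polyXsubC_eq0.
  have szp : size p = (size p').+2 by rewrite pE size_mul // size_exp_XsubC addn3.
  set T'' := rem Q T'.
  have uT'' : uniq T'' := rem_uniq _ uT'.
  have memT'' : forall R, R \in T'' -> [/\ R \in T', R != Q & R != P].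
    move=> R; rewrite /T'' (mem_rem_uniq _ uT') inE => /andP [RQ RT'].
    split => //; apply/eqP => RP; move: PT'; by rewrite -RP RT'.
  have Rx : forall R, R \in T'' -> R.1 != x.
    move=> R /memT'' [RT' RQ RP]; apply/eqP => Rx.
    have [RP'|RQ'] := hx P R PT (sub' _ RT') (esym Rx).
      by rewrite RP' eqxx in RP.
    by rewrite RQ' eqxx in RQ.
  have szT'' : size T' = (size T'').+1.
    by rewrite /T'' size_rem // prednK // lt0n size_eq0; apply: contraTneq QT' => ->.
  have memT : forall R, R \in T'' -> R \in P :: T'.
    by move=> R /memT'' [RT' _ _]; exact: sub' .
  rewrite szp szT'' ltnS ltnS.
  apply: (IH T'' p') => //.
  + by move: szT; rewrite szT'' ltnS => /ltnW.
  + by move=> R R' /memT RT /memT R'T; exact: hx.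
  + move=> R RT; have := hr R (memT _ RT); rewrite pE rootM => /orP [//|].
    by rewrite root_exp_XsubC => /eqP RE; move: (Rx R RT); rewrite RE eqxx.
  + move=> R RT RcT RcR; have := hsq R (memT _ RT) (memT _ RcT) RcR.
    by rewrite pE Gauss_dvdpl // coprimep_expr // coprime_sq_XsubC // Rx.
- have /dvdpP [p' pE] : ('X - x%:P) %| p by rewrite dvdp_XsubCl; exact: hr.
  have p'n0 : p' != 0 by apply: contraNneq pn0 => p'0; rewrite pE p'0 mul0r.
  have szp : size p = (size p').+1 by rewrite pE size_mul ?polyXsubC_eq0 // size_XsubC addn2.
  have Rx : forall R, R \in T' -> R.1 != x.
    move=> R RT'; apply/eqP => Rx.
    have [RP'|RQ'] := hx P R PT (sub' _ RT') (esym Rx).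
      by move: PT'; rewrite RP' RT'.
    by move: QT'; rewrite /Q /x -RQ' RT'.
  rewrite szp ltnS.
  apply: (IH T' p') => //.
  + by move=> R R' /sub' RT /sub' R'T; exact: hx.
  + move=> R RT; have := hr R (sub' _ RT); rewrite pE rootM => /orP [//|].
    by rewrite root_XsubC => /eqP RE; move: (Rx R RT); rewrite RE eqxx.
  + move=> R RT RcT RcR; have := hsq R (sub' _ RT) (sub' _ RcT) RcR.
    by rewrite pE Gauss_dvdpl // coprime_sq_XsubC // Rx.
Qed.

Definition inV (m : nat) (a b : {poly F}) :=
  (size a <= m./2.+1)%N && (size b <= m.-1./2)%N.

Lemma conj_zero (a b : {poly F}) (x y : F) :
  ev_fun a b (x, y) = 0 -> ev_fun a b (x, - y) = 0 -> (x, - y) != (x, y) ->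
  a.[x] = 0 /\ b.[x] = 0.
Proof.
rewrite /ev_fun /= => e1 e2 ne.
have yy : y + y != 0.
  apply: contra ne => /eqP h; apply/eqP; congr (_, _).
  by apply/eqP; rewrite eq_sym -addr_eq0 h.
have hb : b.[x] * (y + y) = 0.
  have -> : b.[x] * (y + y) = (a.[x] + b.[x] * y) - (a.[x] + b.[x] * - y) by ring.
  by rewrite e1 e2 subrr.
have b0 : b.[x] = 0 by move/eqP: hb; rewrite mulf_eq0 (negPf yy) orbF => /eqP.
by split => //; move: e1; rewrite b0 mul0r addr0.
Qed.


Lemma same_x (f : {poly F}) (P Q : F * F) :
  on_curve f P -> on_curve f Q -> P.1 = Q.1 -> P = Q \/ Q = (P.1, - P.2).
Proof.
case: P Q => x y [x' y'] /=; rewrite /on_curve /= => /eqP hP /eqP hQ ex.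
subst x'; have : y' ^+ 2 == y ^+ 2 by rewrite hP hQ.
by rewrite eqf_sqr => /orP [/eqP ->|/eqP ->]; [left|right].
Qed.

Lemma Zbound (f a b : {poly F}) (m : nat) (T : seq (F * F)) :
  size f = 4%N -> inV m a b -> (a != 0) || (b != 0) -> uniq T ->
  all (on_curve f) T ->
  (forall P, P \in T -> ev_fun a b P = 0) -> (size T <= m)%N.
Proof.
move=> sf /andP [sa sb] nz uT /allP onT zT.
set N := a * a - b * b * f.
have f0 : f != 0 by rewrite -size_poly_gt0 sf.
have hm1 := odd_double_half m.
have hm2 := odd_double_half m.-1.
have [NN sN] : N != 0 /\ (size N <= m.+1)%N.
  have [b0|bn0] := eqVneq b 0.
    have an0 : a != 0 by move: nz; rewrite b0 eqxx orbF.
    rewrite /N b0 !mul0r subr0 -size_poly_gt0 size_mul //.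
    have : (0 < size a)%N by rewrite size_poly_gt0.
    move=> sa0.
glia.
  have sbf : size (b * b * f) = ((size b).*2 + 2)%N.
    have bb0 : b * b != 0 by rewrite mulf_neq0.
    rewrite (size_mul bb0 f0) (size_mul bn0 bn0) sf.
    have : (0 < size b)%N by rewrite size_poly_gt0.
    move=> hb; glia.
  have sbf_le : (size (b * b * f)%R <= m.+1)%N.
    rewrite sbf; have : (0 < size b)%N by rewrite size_poly_gt0.
    glia.
  have [a0|an0] := eqVneq a 0.
    rewrite /N a0 mul0r sub0r size_polyN oppr_eq0 -size_poly_gt0 sbf_le sbf; split => //; by rewrite addn2.
  have saa : size (a * a) = ((size a).*2.-1)%N.
    rewrite (size_mul an0 an0); glia.
  have sa0 : (0 < size a)%N by rewrite size_poly_gt0.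
  have hne : size (a * a) != size (b * b * f).
    rewrite saa sbf; apply/eqP; glia.
  have [lt|lt|eq] := ltngtP (size (a * a)) (size (b * b * f)); last by rewrite eq eqxx in hne.
    have sN' : size N = size (b * b * f) by rewrite /N addrC size_polyDl size_polyN.
    by rewrite -size_poly_gt0 sN' sbf_le sbf addn2.
  have sN' : size N = size (a * a) by rewrite /N size_polyDl ?size_polyN.
  rewrite -size_poly_gt0 sN'; split; first exact: leq_ltn_trans (leq0n _) lt.
  rewrite saa; glia.
suff : (size T < size N)%N by move=> h; rewrite -ltnS; exact: leq_trans h sN.
apply: count_pts => //.
- by move=> P Q PT QT; apply: same_x; apply: onT.
- move=> [x y] PT /=; have := zT _ PT; have /eqP := onT _ PT.
  rewrite /ev_fun /on_curve /= => hy /eqP; rewrite addr_eq0 => /eqP ha.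
  rewrite /root /N !hornerE ha -hy; apply/eqP; ring.
- move=> [x y] PT QT QP /=.
  have [ha hb] := conj_zero (zT _ PT) (zT _ QT) QP.
  have da : ('X - x%:P) %| a by rewrite dvdp_XsubCl; apply/eqP.
  have db : ('X - x%:P) %| b by rewrite dvdp_XsubCl; apply/eqP.
  rewrite expr2; apply: dvdp_sub; first exact: (dvdp_mul da da).
  by apply: dvdp_mulr; exact: (dvdp_mul db db).
Qed.

Definition topc (j : nat) (a b : {poly F}) : F :=
  if odd j then (if (3 <= j)%N then b`_((j - 3)./2) else 0) else a`_(j./2).

Lemma coef_ne0_size (p : {poly F}) i : p`_i != 0 -> (i < size p)%N.
Proof. by rewrite ltnNge; apply: contra => /(nth_default 0) ->. Qed.

Lemma size_drop1 (p : {poly F}) N : (size p <= N.+1)%N -> p`_N = 0 -> (size p <= N)%N.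
Proof.
move=> sp pN; apply/leq_sizeP => i; rewrite leq_eqVlt => /orP [/eqP <-//|hi].
exact: nth_default (leq_trans sp hi).
Qed.

Lemma inV_top j (a b : {poly F}) : (1 <= j)%N -> inV j a b -> topc j a b = 0 -> inV j.-1 a b.
Proof.
move=> j1 /andP [sa sb]; rewrite /topc /inV.
have h1 := odd_double_half j; have h2 := odd_double_half j.-1; have h3 := odd_double_half j.-2.
have h4 := odd_double_half (j - 3).
case: j j1 sa sb h1 h2 h3 h4 => // j _ sa sb h1 h2 h3 h4 /=.
case o: (odd j) h1 h2 h3 h4 sa sb => /= h1 h2 h3 h4 sa sb.
- move/(size_drop1 sa) => sa'; apply/andP; split; glia.
- case: ifP => [j3|j3].
    move/(size_drop1 (_ : (size b <= ((j.+1 - 3)./2).+1)%N)) => sb'.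
    apply/andP; split; [glia|].
    have : (size b <= (j.+1 - 3)./2)%N by apply: sb'; glia.
    move: h4; case: (odd (j.+1 - 3)) => /= h4; glia.
  move=> _; apply/andP; split; glia.
Qed.

Lemma bigmin_le (I : finType) (P : pred I) (g : I -> nat) (n : nat) i0 :
  P i0 -> (\big[minn/n]_(i | P i) g i <= g i0)%N.
Proof.
move=> Pi0; rewrite unlock /reducebig.
have : i0 \in index_enum I by rewrite mem_index_enum.
elim: (index_enum I) => //= x r IH; rewrite inE => /orP[/eqP<-|/IH h].
  by rewrite Pi0 geq_minl.
case: (P x) => //; exact: leq_trans (geq_minr _ _) h.
Qed.

Lemma cr_upper n (C : 'M[F]_n) : (covering_radius C <= n - \rank C)%N.
Proof.
apply/bigmax_leqP => u _.
set A := C^T.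
pose f := maxrankfun A.
pose M := rowsub f A.
have frM : row_free M := maxrowsub_free A.
have rfull : row_full M^T by rewrite /row_full mxrank_tr; exact: frM.
pose w : 'rV_(\rank A) := \row_j u 0 (f j).
have /submxP [z wz] : (w <= M^T)%MS by exact: submx_full.
pose c := z *m C.
have cC : (c <= C)%MS by exact: submxMl.
apply: leq_trans (bigmin_le _ _ cC) _.
have agree : forall j, u 0 (f j) = c 0 (f j).
  move=> j; move: wz => /matrixP /(_ 0 j); rewrite !mxE => ->.
  by apply: eq_bigr => i _; rewrite !mxE.
rewrite /hamming.
have sub : [set i | u 0 i != c 0 i] \subset ~: [set f j | j in 'I_(\rank A)].
  apply/subsetP => i; rewrite !inE; apply: contra => /imsetP [j _ ->].
  by rewrite agree.
apply: leq_trans (subset_leq_card sub) _.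
rewrite cardsCs setCK card_imset; last exact: maxrankfun_inj.
rewrite /A mxrank_tr. set K := (X in (_ - X <= _)%N). have -> : K = \rank C by exact: card_ord. by rewrite card_ord.
Qed.


Lemma cr_lower n (C : 'M[F]_n) (u : 'rV_n) v : (v <= n)%N ->
  (forall c, (c <= C)%MS -> (v <= hamming u c)%N) -> (v <= covering_radius C)%N.
Proof.
move=> vn hc; rewrite /covering_radius; apply: leq_trans (leq_bigmax u).
elim/big_ind: _ => // x y hx hy; by rewrite leq_min hx hy.
Qed.

Section Pts.
Variables (f : {poly F}) (D : seq (F * F)).
Hypotheses (sf : size f = 4%N) (uD : uniq D) (onD : all (on_curve f) D).
Local Notation n := (size D).
Local Notation Pt l := (nth (0, 0) D l).

Lemma Pt_inj : injective (fun l : 'I_n => Pt l).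
Proof. by move=> i j /eqP; rewrite nth_uniq // => /eqP /val_inj. Qed.

Definition ptsT (S : {set 'I_n}) := map (fun l : 'I_n => Pt l) (enum S).

Lemma ptsT_size S : size (ptsT S) = #|S|.
Proof. by rewrite size_map cardE. Qed.

Lemma ptsT_uniq S : uniq (ptsT S).
Proof. rewrite map_inj_uniq ?enum_uniq //; exact: Pt_inj. Qed.

Lemma ptsT_on S : all (on_curve f) (ptsT S).
Proof. by apply/allP => P /mapP [l _ ->]; apply: (allP onD); apply: mem_nth. Qed.

Lemma ptsT_mem S P : P \in ptsT S -> exists2 l, l \in S & P = Pt l.
Proof. by move=> /mapP [l]; rewrite mem_enum => lS ->; exists l. Qed.

Lemma Zset (a b : {poly F}) m (S : {set 'I_n}) :
  inV m a b -> (a != 0) || (b != 0) ->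
  (forall l, l \in S -> ev_fun a b (Pt l) = 0) -> (#|S| <= m)%N.
Proof.
move=> hV nz hS; rewrite -ptsT_size.
apply: (Zbound sf hV nz (ptsT_uniq S) (ptsT_on S)).
by move=> P /ptsT_mem [l lS ->]; exact: hS.
Qed.

Lemma Wcontra m (a0 b0 a b : {poly F}) (S : {set 'I_n}) :
  (2 <= m)%N -> inV m.-1 a0 b0 -> topc m.-1 a0 b0 != 0 ->
  inV m a b -> topc m a b != 0 ->
  (forall l, l \in S -> ev_fun a0 b0 (Pt l) = 0 /\ ev_fun a b (Pt l) = 0) ->
  (m.-1 <= #|S|)%N -> False.
Proof.
move=> hm /andP [sa0 sb0] t0 /andP [sa sb] t hS hcard.
set w := a0 * b - a * b0.
suff [wn0 sw] : w != 0 /\ (size w <= m.-1)%N.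
  have : (size (ptsT S) < size w)%N.
    apply: count_pts => //; first exact: ptsT_uniq.
    - move=> P Q /ptsT_mem [l _ ->] /ptsT_mem [l' _ ->]; apply: same_x;
        exact: (allP onD _ (mem_nth _ (ltn_ord _))).
    - move=> P /ptsT_mem [l lS ->]; have [e0 e] := hS l lS.
      move: e0 e; case: (Pt l) => x y; rewrite /ev_fun /= => e0 e.
      move/eqP: e0; rewrite addr_eq0 => /eqP e0.
      move/eqP: e; rewrite addr_eq0 => /eqP e.
      by rewrite /root /w !hornerE e0 e; apply/eqP; ring.
    - move=> P PT QT QP; have [l lS Pl] := ptsT_mem PT.
      have [l' l'S Ql] := ptsT_mem QT.
      have [e0 e] := hS l lS; have [e0' e'] := hS l' l'S.
      rewrite -Pl in e0 e; rewrite -Ql in e0' e'.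
      move: e0 e e0' e' QP; case: P {PT QT Pl Ql} => x y /= e0 e e0' e' QP.
      have [ha0 hb0] := conj_zero e0 e0' QP.
      have [ha hb] := conj_zero e e' QP.
      have dv : forall p : {poly F}, p.[x] = 0 -> ('X - x%:P) %| p.
        by move=> p hp; rewrite dvdp_XsubCl; apply/eqP.
      rewrite expr2; apply: dvdp_sub; exact: dvdp_mul (dv _ _) (dv _ _).
  by rewrite ptsT_size; move=> h; have := leq_trans h sw; rewrite ltnNge hcard.
rewrite /w; clear w; case: m hm sa0 sb0 t0 sa sb t {hS hcard} => // m' hm.
have h1 := odd_double_half m'.+1.
have h2 := odd_double_half m'.
have h3 := odd_double_half (m'.+1 - 3).
have h4 := odd_double_half (m' - 3).
rewrite /topc /= !uphalf_half => sa0 sb0 t0 sa sb t.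
have nz : forall p : {poly F}, (0 < size p)%N -> p != 0.
  by move=> p; rewrite size_poly_gt0.
case o: (odd m') t0 t h2 sa => /= t0 t h2 sa.
- move: t0; case: ifP => [m3|_]; last by rewrite eqxx.
  move=> /coef_ne0_size sb0'; have sa' := coef_ne0_size t.
  have an0 : a != 0 by apply: nz; glia.
  have bn0 : b0 != 0 by apply: nz; glia.
  have sA : size (a * b0) = m' by rewrite size_mul //; move: h4; case: (odd (m' - 3)) => /= h4; glia.
  have sB : (size (a0 * b)%R < m')%N.
    by apply: leq_ltn_trans (size_polyMleq _ _) _; glia.
  have sw : size (a0 * b - a * b0) = m' by rewrite addrC size_polyDl size_polyN ?sA.
  by rewrite -size_poly_gt0 sw; split => //; glia.
- move: t; case: ifP => [m3|_]; last by rewrite eqxx.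
  move=> /coef_ne0_size sb'; have sa0' := coef_ne0_size t0.
  have an0 : a0 != 0 by apply: nz; glia.
  have bn0 : b != 0 by apply: nz; glia.
  have sA : size (a0 * b) = m' by rewrite size_mul //; move: h3; case: (odd (m'.+1 - 3)) => /= h3; glia.
  have sB : (size (a * b0)%R < m')%N.
    by apply: leq_ltn_trans (size_polyMleq _ _) _; glia.
  have sw : size (a0 * b - a * b0) = m' by rewrite size_polyDl ?size_polyN ?sA.
  by rewrite -size_poly_gt0 sw; split => //; glia.
Qed.

Definition lin (phi : {poly F} -> {poly F} -> F) :=
  forall c a b a' b', phi (c *: a + a') (c *: b + b') = c * phi a b + phi a' b'.

Lemma lin00 phi : lin phi -> phi 0 0 = 0.
Proof.
move=> h; have := h 1 0 0 0 0; rewrite scaler0 addr0 mul1r => e.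
by apply: (addrI (phi 0 0)); rewrite addr0 -e.
Qed.

Lemma lin_expand phi (pa pb : nat) (al be : nat -> F) : lin phi ->
  phi (\poly_(i < pa) al i) (\poly_(i < pb) be i) =
  \sum_(i < pa) al i * phi 'X^i 0 + \sum_(i < pb) be i * phi 0 'X^i.
Proof.
move=> h.
have -> : phi (\poly_(i < pa) al i) (\poly_(i < pb) be i) =
  phi (\poly_(i < pa) al i) 0 + phi 0 (\poly_(i < pb) be i).
  have e := h 1 (\poly_(i < pa) al i) 0 0 (\poly_(i < pb) be i).
  by rewrite scale1r addr0 scaler0 add0r mul1r in e.
congr (_ + _).
- rewrite poly_def; elim: pa => [|N IH]; first by rewrite !big_ord0 lin00.
  rewrite !big_ord_recr /= -IH addrC.
  by have := h (al N) 'X^N 0 (\sum_(i < N) al i *: 'X^i) 0; rewrite scaler0 addr0 => ->; rewrite addrC.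
- rewrite poly_def; elim: pb => [|N IH]; first by rewrite !big_ord0 lin00.
  rewrite !big_ord_recr /= -IH addrC.
  by have := h (be N) 0 'X^N 0 (\sum_(i < N) be i *: 'X^i); rewrite scaler0 addr0 => ->; rewrite addrC.
Qed.

Lemma poly_size_eq (p : {poly F}) N : (size p <= N)%N -> p = \poly_(i < N) p`_i.
Proof.
move=> sp; apply/polyP => i; rewrite coef_poly; case: ltnP => // hi.
by move/leq_sizeP: sp; apply; apply: leq_trans hi.
Qed.

Lemma lin_ext phi (pa pb : nat) (a b : {poly F}) : lin phi ->
  (forall i, (i < pa)%N -> phi 'X^i 0 = 0) ->
  (forall i, (i < pb)%N -> phi 0 'X^i = 0) ->
  (size a <= pa)%N -> (size b <= pb)%N -> phi a b = 0.
Proof.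
move=> h ha hb sa sb; rewrite (poly_size_eq sa) (poly_size_eq sb) lin_expand //.
by rewrite !big1 ?addr0 // => i _; rewrite ?ha ?hb ?mulr0.
Qed.

Lemma ev_lin P : lin (fun a b => ev_fun a b P).
Proof.
move=> c a b a' b'; by rewrite /ev_fun !hornerE /=; ring.
Qed.

Lemma topc_lin j : lin (topc j).
Proof.
move=> c a b a' b'; rewrite /topc; case: ifP => _; last by rewrite coefD coefZ.
by case: ifP => _; rewrite ?coefD ?coefZ // mulr0 addr0.
Qed.

Lemma sum_lin (u : 'rV[F]_n) : lin (fun a b => \sum_l u 0 l * ev_fun a b (Pt l)).
Proof.
move=> c a b a' b'; rewrite mulr_sumr -big_split; apply: eq_bigr => l _ /=.
by rewrite ev_lin; ring.
Qed.

Lemma lin_sub phi psi : lin phi -> lin psi -> lin (fun a b => phi a b - psi a b).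
Proof. by move=> h1 h2 c a b a' b'; rewrite h1 h2; ring. Qed.

Section PQ.
Variables pa pb : nat.

Definition vco (N : nat) (w : 'rV[F]_N) (i : nat) : F :=
  if insub i is Some j then w 0 j else 0.

Lemma vcoE N (w : 'rV[F]_N) (j : 'I_N) : vco w j = w 0 j.
Proof. by rewrite /vco valK. Qed.

Definition apoly (v : 'rV[F]_(pa + pb)) := \poly_(i < pa) vco (lsubmx v) i.
Definition bpoly (v : 'rV[F]_(pa + pb)) := \poly_(i < pb) vco (rsubmx v) i.

Lemma apoly_size v : (size (apoly v) <= pa)%N. Proof. exact: size_poly. Qed.
Lemma bpoly_size v : (size (bpoly v) <= pb)%N. Proof. exact: size_poly. Qed.

Lemma pair_nz v : v != 0 -> (apoly v != 0) || (bpoly v != 0).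
Proof.
apply: contraR; rewrite negb_or !negbK => /andP [/eqP a0 /eqP b0].
rewrite -[v]hsubmxK; apply/eqP.
have -> : lsubmx v = 0.
  apply/rowP => i; move/polyP: a0 => /(_ i).
  by rewrite coef_poly ltn_ord coef0 vcoE => ->; rewrite mxE.
have -> : rsubmx v = 0.
  apply/rowP => i; move/polyP: b0 => /(_ i).
  by rewrite coef_poly ltn_ord coef0 vcoE => ->; rewrite mxE.
exact: row_mx0.
Qed.

Lemma lin_vec c (phi : 'I_c -> {poly F} -> {poly F} -> F) (v : 'rV[F]_(pa + pb)) j :
  lin (phi j) ->
  (v *m col_mx (\matrix_(i < pa, j < c) phi j 'X^i 0)
               (\matrix_(i < pb, j < c) phi j 0 'X^i)) 0 j =
  phi j (apoly v) (bpoly v).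
Proof.
move=> h; rewrite /apoly /bpoly lin_expand // -[v]hsubmxK mul_row_col !mxE.
by congr (_ + _); apply: eq_bigr => i _; rewrite vcoE ?row_mxKl ?row_mxKr !mxE.
Qed.

Lemma exists_pair (s : seq 'I_n) (psi : {poly F} -> {poly F} -> F) :
  lin psi -> ((size s).+1 < pa + pb)%N ->
  exists a b : {poly F}, [/\ (a != 0) || (b != 0), (size a <= pa)%N, (size b <= pb)%N,
     (forall l, l \in s -> ev_fun a b (Pt l) = 0) & psi a b = 0].
Proof.
move=> hpsi hs.
pose T := map (fun l : 'I_n => Pt l) s.
pose phi (j : 'I_(size s).+1) :=
  if (j < size s)%N then (fun a b => ev_fun a b (nth (0, 0) T j)) else psi.
have lphi : forall j, lin (phi j).
  by move=> j; rewrite /phi; case: ifP => _; [exact: ev_lin | exact: hpsi].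
pose M := col_mx (\matrix_(i < pa, j < (size s).+1) phi j 'X^i 0)
                 (\matrix_(i < pb, j < (size s).+1) phi j 0 'X^i).
have [v /andP [vn0 /eqP vM]] : exists v : 'rV[F]_(pa + pb), (v != 0) && (v *m M == 0).
  apply/existsP; apply: contraT => /existsPn hn.
  have rf : row_free M.
    apply: inj_row_free => v vM; apply/eqP; move: (hn v).
    by rewrite vM eqxx andbT negbK.
  move: rf; rewrite /row_free => /eqP rk; have := rank_leq_col M; rewrite rk.
  by rewrite leqNgt hs.
have key : forall j, phi j (apoly v) (bpoly v) = 0.
  by move=> j; rewrite -lin_vec // -/M vM mxE.
exists (apoly v), (bpoly v); split.
- exact: pair_nz.
- exact: apoly_size.
- exact: bpoly_size.
- move=> l ls; have hj : (index l s < (size s).+1)%N by rewrite ltnS ltnW // index_mem.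
  have := key (Ordinal hj); rewrite /phi /= index_mem ls.
  by rewrite (nth_map l) ?index_mem // nth_index.
- have := key ord_max; rewrite /phi /= ltnn; exact.
Qed.

End PQ.

Definition pa k := k./2.+1.
Definition pb k := k.-1./2.

Definition Emx k : 'M[F]_(pa k + pb k, n) :=
  col_mx (\matrix_(i < pa k, l < n) ev_fun 'X^i 0 (Pt l))
         (\matrix_(i < pb k, l < n) ev_fun 0 'X^i (Pt l)).

Lemma Emx_vec k (v : 'rV[F]_(pa k + pb k)) l :
  (v *m Emx k) 0 l = ev_fun (apoly v) (bpoly v) (Pt l).
Proof. rewrite /Emx; exact: (@lin_vec (pa k) (pb k) n (fun (j : 'I_n) a b => ev_fun a b (Pt j)) v l (ev_lin (Pt l))). Qed.

Lemma Emx_free k : (k.+1 <= n)%N -> row_free (Emx k).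
Proof.
move=> kn; apply: inj_row_free => v vE; apply/eqP; apply: contraT => vn0.
have := @Zset (apoly v) (bpoly v) k [set: 'I_n].
rewrite cardsT card_ord leqNgt kn; apply => //.
  by rewrite /inV apoly_size bpoly_size.
- exact: pair_nz.
- by move=> l _; rewrite -Emx_vec vE mxE.
Qed.

Lemma pab k : (1 <= k)%N -> (pa k + pb k = k)%N.
Proof. move=> hk; rewrite /pa /pb; have := odd_double_half k; have := odd_double_half k.-1.
case: k hk => // k _ /=; rewrite !uphalf_half; case: (odd k) => /=; lia. Qed.

Lemma E_sub_G k : (Emx k <= genL D k)%MS.
Proof.
have h1 := odd_double_half k; have h2 := odd_double_half k.-1.
apply/row_subP => i; case: (split_ordP i) => j ->; rewrite /Emx ?rowKu ?rowKd.
- have hj : (j < k.+1)%N by have := ltn_ord j; rewrite /pa; lia.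
  have -> : row j (\matrix_(i < pa k, l < n) ev_fun 'X^i 0 (Pt l)) =
            row (lshift k.+1 (Ordinal hj)) (genL D k).
    rewrite /genL rowKu; apply/rowP => l; rewrite !mxE /=.
    have -> : (2 * j <= k)%N by have := ltn_ord j; rewrite /pa; lia.
    by [].
  exact: row_sub.
- have hj : (j < k.+1)%N by have := ltn_ord j; rewrite /pb; lia.
  have -> : row j (\matrix_(i < pb k, l < n) ev_fun 0 'X^i (Pt l)) =
            row (rshift k.+1 (Ordinal hj)) (genL D k).
    rewrite /genL rowKd; apply/rowP => l; rewrite !mxE /=.
    have -> : (2 * j + 3 <= k)%N by have := ltn_ord j; rewrite /pb; lia.
    by [].
  exact: row_sub.
Qed.

Lemma G_sub_E k : (genL D k <= Emx k)%MS.
Proof.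
have h1 := odd_double_half k; have h2 := odd_double_half k.-1.
apply/row_subP => i; case: (split_ordP i) => j ->; rewrite /genL ?rowKu ?rowKd.
- case: (boolP (2 * j <= k)%N) => hjk.
    have hj : (j < pa k)%N by rewrite /pa; lia.
    have -> : row j (\matrix_(i < k.+1, l < n)
        (if (2 * i <= k)%N then ev_fun 'X^i 0 (Pt l) else 0)) =
            row (lshift (pb k) (Ordinal hj)) (Emx k).
      rewrite /Emx rowKu; apply/rowP => l; rewrite !mxE /=.
      by rewrite hjk.
    exact: row_sub.
  have -> : row j (\matrix_(i < k.+1, l < n)
        (if (2 * i <= k)%N then ev_fun 'X^i 0 (Pt l) else 0)) = 0.
    by apply/rowP => l; rewrite !mxE (negPf hjk).
  exact: sub0mx.
- case: (boolP (2 * j + 3 <= k)%N) => hjk.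
    have hj : (j < pb k)%N by rewrite /pb; lia.
    have -> : row j (\matrix_(i < k.+1, l < n)
        (if (2 * i + 3 <= k)%N then ev_fun 0 'X^i (Pt l) else 0)) =
            row (rshift (pa k) (Ordinal hj)) (Emx k).
      rewrite /Emx rowKd; apply/rowP => l; rewrite !mxE /=.
      by rewrite hjk.
    exact: row_sub.
  have -> : row j (\matrix_(i < k.+1, l < n)
        (if (2 * i + 3 <= k)%N then ev_fun 0 'X^i (Pt l) else 0)) = 0.
    by apply/rowP => l; rewrite !mxE (negPf hjk).
  exact: sub0mx.
Qed.

Lemma rank_G k : (1 <= k)%N -> (k.+1 <= n)%N -> \rank (genL D k) = k.
Proof.
move=> k1 kn; apply/eqP; rewrite eqn_leq; apply/andP; split.
  apply: leq_trans (mxrankS (G_sub_E k)) _.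
  by apply: leq_trans (rank_leq_row _) _; rewrite pab.
have := mxrankS (E_sub_G k); move: (Emx_free kn); rewrite /row_free => /eqP ->.
by rewrite pab.
Qed.

Lemma exists_out (A : {set 'I_n}) : (#|A| < n)%N -> exists R, R \notin A.
Proof.
move=> hA; have : (0 < #|~: A|)%N by rewrite cardsCs setCK card_ord subn_gt0.
by move=> /card_gt0P [R]; rewrite inE => RA; exists R.
Qed.

Lemma pad (A : {set 'I_n}) m : (#|A| <= m)%N -> (m < n)%N ->
  exists S : {set 'I_n}, [/\ A \subset S, #|S| = m & exists R, R \notin S].
Proof.
move=> hA hm; have [d hd] : exists d, m = (#|A| + d)%N by exists (m - #|A|)%N; rewrite subnKC.
elim: d A hA hd => [|d IH] A hA hd.
  have hlt : (#|A| < n)%N by rewrite hd addn0 in hm.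
  have [R RA] := exists_out hlt.
  by exists A; split => //; [rewrite hd addn0 | exists R].
have hlt : (#|A| < n)%N.
  by apply: leq_ltn_trans hm; rewrite hd leq_addr.
have [x xA] := exists_out hlt.
have c1 : (#|x |: A| <= m)%N by rewrite cardsU1 xA hd addnS /= add1n ltnS leq_addr.
have c2 : m = (#|x |: A| + d)%N by rewrite cardsU1 xA hd addnS.
have [S [s1 s2 s3]] := IH (x |: A) c1 c2.
exists S; split => //; apply: subset_trans s1; exact: subsetUr.
Qed.

Lemma topk_exists k (S : {set 'I_n}) R : (2 <= k)%N -> #|S| = k.-2 -> R \notin S ->
  exists a b : {poly F},
    [/\ inV k a b, (forall l, l \in S -> ev_fun a b (Pt l) = 0) & topc k a b != 0].
Proof.
move=> k2 cS RS.
have hsz : ((size (enum S)).+1 < pa k + pb k)%N.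
  rewrite pab; last by apply: leq_trans k2.
  by rewrite -cardE cS; move: k2; clear; lia.
have [a [b [nz sa sb zS zR]]] := exists_pair (s := enum S) (ev_lin (Pt R)) hsz.
have hV : inV k a b by apply/andP.
have zS' : forall l, l \in S -> ev_fun a b (Pt l) = 0.
  by move=> l lS; apply: zS; rewrite mem_enum.
have [t0|tn] := eqVneq (topc k a b) 0; last by exists a, b.
have k1 : (1 <= k)%N by move: k2; clear; lia.
have k1' : (1 <= k.-1)%N by move: k2; clear; lia.
have hV1 := inV_top k1 hV t0.
have t1 : topc k.-1 a b != 0.
  apply/eqP => t1.
  have hV2 := inV_top k1' hV1 t1.
  have zRS : forall l, l \in R |: S -> ev_fun a b (Pt l) = 0.
    move=> l; rewrite in_setU1 => /orP [/eqP ->|/zS' //]; exact: zR.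
  have := @Zset a b k.-1.-1 (R |: S) hV2 nz zRS.
  rewrite cardsU1 RS cS add1n; move: k2; clear; lia.
have k3 : (3 <= k)%N.
  move: t1; rewrite /topc; case: k k2 {cS hsz hV hV1 t0 sa sb k1 k1'} => // [[|[|k]]] //.
  by rewrite /= eqxx.
have [a' [b' [nz' sa' sb' zS2 t1']]] := exists_pair (s := enum S) (topc_lin k.-1) hsz.
have hV' : inV k a' b' by apply/andP.
have zS2' : forall l, l \in S -> ev_fun a' b' (Pt l) = 0.
  by move=> l lS; apply: zS2; rewrite mem_enum.
have [t0'|tn'] := eqVneq (topc k a' b') 0; last by exists a', b'.
have V1' := inV_top k1 hV' t0'.
have V2' := inV_top k1' V1' t1'.
have k1'' : (1 <= k.-1.-1)%N by move: k3; clear; lia.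
have t2 : topc k.-1.-1 a' b' != 0.
  apply/eqP => t2.
  have V3 := inV_top k1'' V2' t2.
  have := @Zset a' b' k.-1.-1.-1 S V3 nz' zS2'.
  rewrite cS; move: k3; clear; lia.
exfalso; apply: (@Wcontra k.-1 a' b' a b S).
- by move: k3; clear; lia.
- exact: V2'.
- exact: t2.
- exact: hV1.
- exact: t1.
- by move=> l lS; split; [exact: zS2'|exact: zS'].
- by rewrite cS.
Qed.

Lemma ev_sub (a b a' b' : {poly F}) P :
  ev_fun (a - a') (b - b') P = ev_fun a b P - ev_fun a' b' P.
Proof. by rewrite /ev_fun !hornerE /=; ring. Qed.

Lemma L_lower k : (2 <= k)%N -> (k.+2 <= n)%N ->
  (n - k - 1 <= covering_radius (code_L D k))%N.
Proof.
move=> k2 kn.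
pose a1 : {poly F} := if odd k then 'X^(k.+1./2) else 0.
pose b1 : {poly F} := if odd k then 0 else 'X^((k - 2)./2).
pose u : 'rV[F]_n := \row_l ev_fun a1 b1 (Pt l).
apply: (cr_lower (u := u)); first by rewrite -subnDA leq_subr.
move=> c; rewrite /code_L genmxE => cG.
have /submxP [v ->] := submx_trans cG (G_sub_E k).
set a := apoly v; set b := bpoly v.
have sa : (size a <= k./2.+1)%N := apoly_size v.
have sb : (size b <= k.-1./2)%N := bpoly_size v.
have h1 := odd_double_half k; have h2 := odd_double_half k.-1.
have h3 := odd_double_half k.+1; have h4 := odd_double_half (k - 2).
have hV : inV k.+1 (a1 - a) (b1 - b).
  apply/andP; split.
    apply: leq_trans (size_polyD _ _) _; rewrite size_polyN geq_max.
    apply/andP; split; last by move: sa; clear -h1 h3; rewrite /=; case: (odd k) h1 h3 => /= h1 h3; rewrite ?uphalf_half /=; glia.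
    rewrite /a1; case: ifP => o; last by rewrite size_poly0.
    by rewrite size_polyXn.
  apply: leq_trans (size_polyD _ _) _; rewrite size_polyN geq_max.
  apply/andP; split; last by move: sb; clear -h1 h2; rewrite /=; glia.
  rewrite /b1; case: ifP => o; first by rewrite size_poly0.
  rewrite size_polyXn /=; move: h1 h4 k2; rewrite o /=; clear; glia.
have nz : (a1 - a != 0) || (b1 - b != 0).
  rewrite /a1 /b1; case: ifP => o.
    apply/orP; left; apply/eqP => /polyP /(_ k.+1./2).
    rewrite coefB coefXn eqxx coef0 (nth_default 0) ?subr0; first by move/eqP; rewrite oner_eq0.
    apply: leq_trans sa _; move: h1 h3; rewrite o /=; clear; glia.
  apply/orP; right; apply/eqP => /polyP /(_ ((k - 2)./2)).
  rewrite coefB coefXn eqxx coef0 (nth_default 0) ?subr0; first by move/eqP; rewrite oner_eq0.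
  apply: leq_trans sb _; move: h1 h2 h4 k2; rewrite o /=; clear; glia.
set Z := [set l : 'I_n | ev_fun (a1 - a) (b1 - b) (Pt l) == 0].
have cZ : (#|Z| <= k.+1)%N by apply: (Zset hV nz) => l; rewrite inE => /eqP.
rewrite /hamming; have -> : [set l | u 0 l != (v *m Emx k) 0 l] = ~: Z.
  apply/setP => l; rewrite !inE mxE Emx_vec ev_sub subr_eq0.
  by rewrite -/a -/b.
rewrite cardsCs setCK card_ord.
by rewrite -subnDA addn1 leq_sub2l.
Qed.

Lemma EmxT_entry k (w : 'rV[F]_n) r :
  (w *m (Emx k)^T) 0 r = \sum_l w 0 l * Emx k r l.
Proof. by rewrite mxE; apply: eq_bigr => l _; rewrite mxE. Qed.

Lemma Emx_l k (i : 'I_(pa k)) l : Emx k (lshift (pb k) i) l = ev_fun 'X^i 0 (Pt l).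
Proof. by rewrite /Emx col_mxEu mxE. Qed.

Lemma Emx_r k (i : 'I_(pb k)) l : Emx k (rshift (pa k) i) l = ev_fun 0 'X^i (Pt l).
Proof. by rewrite /Emx col_mxEd mxE. Qed.

Lemma lin_ext_E k (w : 'rV[F]_n) (psi : {poly F} -> {poly F} -> F) (a b : {poly F}) :
  lin psi -> inV k a b ->
  (forall r, (w *m (Emx k)^T) 0 r = 
     (row_mx (\row_(i < pa k) psi 'X^i 0) (\row_(i < pb k) psi 0 'X^i)) 0 r) ->
  \sum_l w 0 l * ev_fun a b (Pt l) = psi a b.
Proof.
move=> hpsi /andP [sa sb] hr; apply/eqP; rewrite -subr_eq0; apply/eqP.
apply: (@lin_ext (fun a b => \sum_l w 0 l * ev_fun a b (Pt l) - psi a b) (pa k) (pb k)) => //.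
- exact: lin_sub (sum_lin w) hpsi.
- move=> i hi; have := hr (lshift (pb k) (Ordinal hi)).
  rewrite EmxT_entry row_mxEl mxE => e; apply/eqP; rewrite -e subr_eq0; apply/eqP.
  by apply: eq_bigr => l _; rewrite Emx_l.
- move=> i hi; have := hr (rshift (pa k) (Ordinal hi)).
  rewrite EmxT_entry row_mxEr mxE => e; apply/eqP; rewrite -e subr_eq0; apply/eqP.
  by apply: eq_bigr => l _; rewrite Emx_r.
Qed.

Lemma O_lower k : (2 <= k)%N -> (k.+2 <= n)%N ->
  (k.-1 <= covering_radius (code_Omega D k))%N.
Proof.
move=> k2 kn.
have kn1 : (k.+1 <= n)%N by apply: ltnW.
have /row_freeP [B EB] := Emx_free kn1.
pose tv := row_mx (\row_(i < pa k) topc k 'X^i 0) (\row_(i < pb k) topc k 0 'X^i).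
pose u := tv *m B^T.
have uE : u *m (Emx k)^T = tv by rewrite /u -mulmxA -trmx_mul EB trmx1 mulmx1.
have U : forall a b, inV k a b -> \sum_l u 0 l * ev_fun a b (Pt l) = topc k a b.
  by move=> a b hV; apply: lin_ext_E (topc_lin k) hV _ => r; rewrite uE.
apply: (cr_lower (u := u)); first by move: kn; clear; lia.
move=> c cO.
have cE : c *m (Emx k)^T = 0.
  have /submxP [X EX] := E_sub_G k.
  move/sub_kermxP: cO => cG; by rewrite EX trmx_mul mulmxA cG mul0mx.
have Cz : forall a b, inV k a b -> \sum_l c 0 l * ev_fun a b (Pt l) = 0.
  move=> a b hV; apply: (lin_ext_E (psi := fun _ _ => 0)) hV _.
    by move=> *; rewrite mulr0 addr0.
  move=> r; rewrite cE; case: (split_ordP r) => j ->;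
    by rewrite ?row_mxEl ?row_mxEr !mxE.
rewrite leqNgt; apply/negP => hlt.
set Sidx := [set l | u 0 l != c 0 l].
have cS : (#|Sidx| <= k.-2)%N by move: hlt; rewrite /hamming -/Sidx; clear; lia.
have kn2 : (k.-2 < n)%N by move: kn; clear; lia.
have [S [sub cS' [R RS]]] := pad cS kn2.
have [a [b [hV zS tn]]] := topk_exists k2 cS' RS.
move/eqP: tn; apply.
have e : \sum_l (u 0 l * ev_fun a b (Pt l) - c 0 l * ev_fun a b (Pt l)) = 0.
  apply: big1 => l _; rewrite -mulrBl; case: (boolP (l \in Sidx)) => h.
    by rewrite zS ?mulr0 //; exact: (subsetP sub).
  by move: h; rewrite inE negbK => /eqP ->; rewrite subrr mul0r.
by rewrite sumrB U // Cz // subr0 in e.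
Qed.

Lemma main_sec k (C : 'M[F]_n) : (2 <= k)%N -> (k <= n - 2)%N ->
  C = code_Omega D k \/ C = code_L D k ->
  covering_radius C = (n - \rank C - 1)%N \/ covering_radius C = (n - \rank C)%N.
Proof.
move=> k2 kn' hC.
have kn : (k.+2 <= n)%N by move: k2 kn'; clear; lia.
have k1 : (1 <= k)%N by move: k2; clear; lia.
have kn1 : (k.+1 <= n)%N by apply: ltnW.
have rG := rank_G k1 kn1.
case: hC => ->.
- have rk : \rank (code_Omega D k) = (n - k)%N by rewrite /code_Omega mxrank_ker mxrank_tr rG.
  have up := cr_upper (code_Omega D k); have lo := O_lower k2 kn.
  rewrite rk in up *; move: up lo kn; clear; lia.
- have rk : \rank (code_L D k) = k by rewrite /code_L mxrank_gen rG.
  have up := cr_upper (code_L D k); have lo := L_lower k2 kn.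
  rewrite rk in up *; move: up lo kn; clear; lia.
Qed.

End Pts.
End Curve.


Theorem lemma3p1 (F : finFieldType) (f : {poly F}) (D : seq (F * F)) (k : nat)
  (C : 'M[F]_(size D)) :
  odd #|F| ->
  elliptic_poly f ->
  uniq D -> all (on_curve f) D ->
  (2 <= k)%N -> (k <= size D - 2)%N ->
  C = code_Omega D k \/ C = code_L D k ->
  covering_radius C = (size D - \rank C - 1)%N \/
  covering_radius C = (size D - \rank C)%N.
Proof.
move=> _ /and3P [/eqP sf _ _] uD onD k2 kn hC.
exact: (main_sec sf uD onD k2 kn hC).
Qed.
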